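(* Let $m>1$, $\chi>0$, and let $p\ge2$ be an integer. The maximum $$\frac1{C_p}:=\max_{X\in\mathcal R^p}\frac{\sum_{1\le i\ne j\le p}|X_j-X_i|^{1-m}}{\sum_{i=1}^{p-1}(X_{i+1}-X_i)^{1-m}}$$ is attained and satisfies $\frac1{C_p}\le p$. Moreover, if $\alpha\ge0$, then $\mathcal F^p_{m,\alpha}$ is bounded below on $\mathcal R^p$ if and only if $\chi\le C_p$.
   Context: $\mathcal R^p=\{X\in\mathbb R^p: X_1<\dots<X_p,\ \sum_iX_i=0\}$. For $\alpha\in\mathbb R$, $\mathcal F^p_{m,\alpha}(X)=\frac1{m-1}\sum_{i=1}^{p-1}(X_{i+1}-X_i)^{1-m}-\frac{\chi}{m-1}\sum_{1\le i\ne j\le p}|X_i-X_j|^{1-m}+\alpha\frac{|X|^2}{2}$, with $|\cdot|$ the Euclidean norm. *)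

(* Defs.v *)
From HB Require Import structures.
From mathcomp Require Import all_boot all_order all_algebra.
From mathcomp Require Import reals exp.
Set Implicit Arguments. Unset Strict Implicit. Unset Printing Implicit Defensive.
Import Order.TTheory GRing.Theory Num.Theory.
Local Open Scope ring_scope.

Section Defs.
Variable R : realType.

(* The set R^p = { X : X_1 < ... < X_p, sum_i X_i = 0 } (0-based indices). *)
Definition in_Rp (p : nat) (X : p.-tuple R) : Prop :=
  (forall i : nat, (i.+1 < p)%N -> X`_i < X`_i.+1) /\
  \sum_(0 <= i < p) X`_i = 0.

Definition consec_sum (m : R) (p : nat) (X : p.-tuple R) : R :=
  \sum_(0 <= i < p.-1) (X`_i.+1 - X`_i) `^ (1 - m).

Definition pair_sum (m : R) (p : nat) (X : p.-tuple R) : R :=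
  \sum_(0 <= i < p) \sum_(0 <= j < p | i != j) `|X`_i - X`_j| `^ (1 - m).

Definition sqnorm (p : nat) (X : p.-tuple R) : R :=
  \sum_(0 <= i < p) X`_i ^+ 2.

(* The quotient whose maximum is 1/C_p *)
Definition cp_ratio (m : R) (p : nat) (X : p.-tuple R) : R :=
  pair_sum m X / consec_sum m X.

Definition Fp (chi m alpha : R) (p : nat) (X : p.-tuple R) : R :=
  (m - 1)^-1 * consec_sum m X - chi / (m - 1) * pair_sum m X
  + alpha * (sqnorm X / 2).
End Defs.

(* Main.v *)
Require Import Defs.
From HB Require Import structures.
From mathcomp Require Import all_boot all_order all_algebra.
From mathcomp Require Import all_classical all_reals all_analysis.
From mathcomp Require Import ring lra.
Import Order.TTheory GRing.Theory Num.Theory numFieldNormedType.Exports.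
Local Open Scope ring_scope.
Section S.
Variable R : realType.
Variable m : R.
Hypothesis m1 : 1 < m.

Lemma pw_anti (x y : R) : 0 < x -> x <= y -> y `^ (1 - m) <= x `^ (1 - m).
Proof.
move=> x0 xy.
have y0 : 0 < y by apply: lt_le_trans xy.
rewrite -opprB !powRN lef_pV2 ?posrE ?powR_gt0//.
apply: ge0_ler_powR => //; last by rewrite nnegrE ltW.
  by rewrite subr_ge0 ltW.
by rewrite nnegrE ltW.
Qed.

Definition Cs (s : seq R) := \sum_(0 <= i < (size s).-1) (s`_i.+1 - s`_i) `^ (1 - m).
Definition Ps (s : seq R) :=
  \sum_(0 <= i < size s) \sum_(0 <= j < size s | i != j) `|s`_i - s`_j| `^ (1 - m).
Definition incr (s : seq R) := forall i, (i.+1 < size s)%N -> s`_i < s`_i.+1.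
Definition rat s := Ps s / Cs s.

Lemma incr_lt s i j : incr s -> (i < j)%N -> (j < size s)%N -> s`_i < s`_j.
Proof.
move=> hs; elim: j => // j IH; rewrite ltnS leq_eqVlt => /orP[/eqP->|ij] js.
  exact: hs.
by apply: lt_trans (IH ij (ltnW js)) (hs _ js).
Qed.

Lemma incr_le s i j : incr s -> (i <= j)%N -> (j < size s)%N -> s`_i <= s`_j.
Proof.
move=> hs; rewrite leq_eqVlt => /orP[/eqP->//|ij] js.
exact/ltW/incr_lt.
Qed.

Lemma sum_ge_term (F : nat -> R) n l : (forall i, 0 <= F i) -> (l < n)%N ->
  F l <= \sum_(0 <= i < n) F i.
Proof.
move=> F0 ln; rewrite big_mkord (bigD1 (Ordinal ln)) //= lerDl.
by apply: sumr_ge0 => i _.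
Qed.

Lemma Cs_ge0 s : 0 <= Cs s.
Proof. by apply: sumr_ge0 => i _; exact: powR_ge0. Qed.

Lemma Ps_ge0 s : 0 <= Ps s.
Proof. by apply: sumr_ge0 => i _; apply: sumr_ge0 => j _; exact: powR_ge0. Qed.

Lemma Cs_gt0 s : incr s -> (2 <= size s)%N -> 0 < Cs s.
Proof.
move=> hs s2; have h0 : (0 < (size s).-1)%N by case: (size s) s2 => [|[|k]].
rewrite /Cs; apply: (lt_le_trans _ (@sum_ge_term (fun i => (s`_i.+1 - s`_i) `^ (1 - m)) _ _ (fun i => powR_ge0 _ _) h0)).
by rewrite powR_gt0 // subr_gt0; apply: hs; rewrite -(prednK (ltnW s2)) ltnS.
Qed.

Lemma rat_ge0 s : 0 <= rat s.
Proof. by rewrite /rat divr_ge0 ?Ps_ge0 ?Cs_ge0. Qed.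

Lemma small_PC s : (size s <= 1)%N -> Ps s = 0 /\ Cs s = 0.
Proof.
case: s => [|x [|//]] _; first by rewrite /Ps /Cs !big_geq.
split; last by rewrite /Cs big_geq.
by rewrite /Ps big_nat1 big_mkcond big_nat1.
Qed.

Lemma Cs_rcons s y : (0 < size s)%N ->
  Cs (rcons s y) = Cs s + (y - s`_(size s).-1) `^ (1 - m).
Proof.
move=> s0; rewrite /Cs size_rcons /= -(prednK s0) big_nat_recr //=.
have e1 : (rcons s y)`_(size s) = y by rewrite nth_rcons ltnn eqxx.
have e2 : (rcons s y)`_(size s).-1 = s`_(size s).-1.
  by rewrite nth_rcons ltn_predL s0.
rewrite (prednK s0) e1 e2; congr (_ + _).
apply: eq_big_nat => i /andP[_ hi].
have hi' : (i < size s)%N by apply: (leq_trans hi); rewrite leq_pred.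
have hi'' : (i.+1 < size s)%N by rewrite -(prednK s0) ltnS.
by rewrite !nth_rcons hi' hi''.
Qed.

Lemma Ps_rcons s y : Ps (rcons s y) =
  Ps s + 2 * \sum_(0 <= i < size s) `|y - s`_i| `^ (1 - m).
Proof.
rewrite /Ps size_rcons big_nat_recr //=.
set k := size s.
have Hr i : (i < k)%N -> (rcons s y)`_i = s`_i by move=> ik; rewrite nth_rcons ik.
have Hk : (rcons s y)`_k = y by rewrite nth_rcons ltnn eqxx.
have -> : \sum_(0 <= j < k.+1 | k != j) `|(rcons s y)`_k - (rcons s y)`_j| `^ (1 - m)
   = \sum_(0 <= i < k) `|y - s`_i| `^ (1 - m).
  rewrite big_mkcond big_nat_recr //= eqxx addr0.
  apply: eq_big_nat => j /andP[_ jk]; rewrite Hk Hr // eq_sym (ltn_eqF jk) //.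
have -> : \sum_(0 <= i < k) \sum_(0 <= j < k.+1 | i != j)
      `|(rcons s y)`_i - (rcons s y)`_j| `^ (1 - m) =
    \sum_(0 <= i < k) (\sum_(0 <= j < k | i != j) `|s`_i - s`_j| `^ (1 - m)
      + `|y - s`_i| `^ (1 - m)).
  apply: eq_big_nat => i /andP[_ ik].
  rewrite big_mkcond big_nat_recr //= (ltn_eqF ik) Hk Hr // distrC; congr (_ + _).
  rewrite [RHS]big_mkcond; apply: eq_big_nat => j /andP[_ jk].
  by rewrite !Hr.
by rewrite big_split /= -addrA mulr2n mulrDl mul1r.
Qed.

Lemma incr_rcons s y : incr (rcons s y) -> incr s.
Proof.
move=> h i hi; have := h i; rewrite size_rcons !nth_rcons hi (ltnW hi).
by apply; rewrite ltnS ltnW.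
Qed.

Lemma Ps_le s : incr s -> Ps s <= (size s)%:R * Cs s.
Proof.
elim/last_ind: s => [|s y IH] hs.
  by have [-> ->] := @small_PC [::] isT; rewrite mulr0.
have hs' := incr_rcons _ _ hs; have {}IH := IH hs'.
case: (posnP (size s)) => [s0|s0].
  by have := @small_PC (rcons s y); rewrite size_rcons s0 => /(_ isT) [-> ->]; rewrite mulr0.
set k := size s in s0 IH *.
set t := y - s`_k.-1.
have Hr i : (i < k)%N -> (rcons s y)`_i = s`_i by move=> ik; rewrite nth_rcons ik.
have Hk : (rcons s y)`_k = y by rewrite nth_rcons ltnn eqxx.
have key : 2 * \sum_(0 <= i < k) `|y - s`_i| `^ (1 - m) <=
    Cs (rcons s y) + k%:R * t `^ (1 - m).
  have -> : k%:R * t `^ (1 - m) = \sum_(0 <= i < k) t `^ (1 - m).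
    by rewrite sumr_const_nat subn0 mulr_natl.
  rewrite /Cs size_rcons /= -big_split /= mulr_sumr.
  apply: ler_sum_nat => i /andP[_ ik].
  have ylt : s`_i < y.
    by rewrite -Hk -Hr //; apply: incr_lt => //; rewrite size_rcons.
  rewrite ger0_norm; last by rewrite subr_ge0 ltW.
  rewrite mulr2n mulrDl mul1r.
  apply: lerD.
    apply: pw_anti.
      rewrite subr_gt0; apply: hs; rewrite size_rcons ltnS //.
    rewrite (Hr i ik) lerD2r; have := incr_le (rcons s y) i.+1 k hs ik.
    by rewrite Hk size_rcons; apply.
  apply: pw_anti.
    have hk1 : (k.-1 < k)%N by rewrite ltn_predL.
    have := incr_lt (rcons s y) k.-1 k hs hk1.
    by rewrite Hk Hr // size_rcons subr_gt0; apply.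
  rewrite /t lerD2l lerN2; apply: incr_le => //; last by rewrite ltn_predL.
  by rewrite -ltnS prednK.
rewrite Ps_rcons size_rcons -natr1 Cs_rcons //.
rewrite Cs_rcons // in key.
have := powR_ge0 t (1 - m); have := Cs_ge0 s; have : (0:R) <= k%:R by [].
move: IH key; set P := Ps s; set C := Cs s; set E := \sum_(_ <= _ < _) _; set T := t `^ _.
rewrite /t; set K := k%:R. move=> *; lra.
Qed.

Lemma incr_map l c s : 0 < l -> incr s -> incr (map (fun x => l * x + c) s).
Proof.
move=> l0 hs i; rewrite size_map => hi.
rewrite !(nth_map 0) ?(ltnW hi) // ltrD2r ltr_pM2l //; exact: hs.
Qed.

Lemma Cs_map l c s : 0 < l -> incr s ->
  Cs (map (fun x => l * x + c) s) = l `^ (1 - m) * Cs s.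
Proof.
move=> l0 hs; rewrite /Cs size_map mulr_sumr; apply: eq_big_nat => i /andP[_ hi].
have hi1 : (i.+1 < size s)%N.
  by case: (size s) hi => // n; rewrite /= -ltnS.
rewrite !(nth_map 0) ?(ltnW hi1) //.
have -> : l * s`_i.+1 + c - (l * s`_i + c) = l * (s`_i.+1 - s`_i) by ring.
by rewrite powRM ?(ltW l0) // subr_ge0 ltW //; exact: hs.
Qed.

Lemma Ps_map l c s : 0 < l ->
  Ps (map (fun x => l * x + c) s) = l `^ (1 - m) * Ps s.
Proof.
move=> l0; rewrite /Ps size_map mulr_sumr; apply: eq_big_nat => i /andP[_ hi].
rewrite [in LHS]big_mkcond [in RHS]big_mkcond mulr_sumr.
apply: eq_big_nat => j /andP[_ hj]; case: ifP => _; last by rewrite mulr0.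
rewrite !(nth_map 0) //.
have -> : l * s`_i + c - (l * s`_j + c) = l * (s`_i - s`_j) by ring.
by rewrite normrM gtr0_norm // powRM ?(ltW l0).
Qed.

Lemma rat_map l c s : 0 < l -> incr s ->
  rat (map (fun x => l * x + c) s) = rat s.
Proof.
move=> l0 hs; rewrite /rat Cs_map // Ps_map // invfM mulrACA mulfV ?mul1r //.
by rewrite gt_eqF // powR_gt0.
Qed.

Lemma extend s : incr s -> (2 <= size s)%N ->
  exists y, incr (rcons s y) /\ rat s < rat (rcons s y).
Proof.
move=> hs s2; set k := size s in s2.
have k0 : (0 < k)%N by apply: leq_trans s2.
have hk1 : (k.-1 < k)%N by rewrite ltn_predL.
set D := s`_k.-1 - s`_0.
have D0 : 0 <= D by rewrite subr_ge0; apply: incr_le.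
set b := 2 `^ ((m - 1)^-1).
have b1 : 1 < b.
  rewrite /b /powR ifF; last by rewrite pnatr_eq0.
  rewrite expR_gt1 mulr_gt0 //.
    by rewrite invr_gt0 subr_gt0.
  by apply: ln_gt0; rewrite ltr1n.
have ba : b `^ (1 - m) = 2^-1.
  rewrite /b -powRrM (_ : (m - 1)^-1 * (1 - m) = -1) ?powR_inv1 //.
  by rewrite -[1 - m]opprB mulrN mulVf // subr_eq0 gt_eqF.
set t := D / (b - 1) + 1.
have b10 : 0 < b - 1 by rewrite subr_gt0.
have t0 : 0 < t by rewrite /t ltr_wpDl // divr_ge0 // ltW.
set y := s`_k.-1 + t.
have Hr i : (i < k)%N -> (rcons s y)`_i = s`_i by move=> ik; rewrite nth_rcons ik.
have Hk : (rcons s y)`_k = y by rewrite nth_rcons ltnn eqxx.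
have hr : incr (rcons s y).
  move=> i; rewrite size_rcons ltnS leq_eqVlt => /orP[/eqP ik|ik].
    have -> : i = k.-1 by rewrite /k -ik.
    by rewrite prednK // Hk Hr // /y ltrDl.
  by rewrite !Hr ?(ltnW ik) //; apply: hs.
exists y; split => //.
set T := t `^ (1 - m).
have T0 : 0 < T by rewrite powR_gt0.
have hE : (k.+1)%:R * T <= 2 * \sum_(0 <= i < k) `|y - s`_i| `^ (1 - m).
  rewrite -(prednK k0) big_nat_recr //= (prednK k0).
  have -> : `|y - s`_k.-1| = t by rewrite /y addrC addKr gtr0_norm.
  have : (k.-1)%:R * (T / 2) <= \sum_(0 <= i < k.-1) `|y - s`_i| `^ (1 - m).
    rewrite -[k.-1 in X in X%:R]subn0 mulr_natl -sumr_const_nat.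
    apply: ler_sum_nat => i /andP[_ ik].
    have ik' : (i < k)%N by apply: ltn_trans hk1.
    have yi : 0 < y - s`_i.
      by rewrite subr_gt0 /y; apply: (le_lt_trans (incr_le _ _ _ hs (ltnW ik) hk1)); rewrite ltrDl.
    rewrite gtr0_norm //.
    have : y - s`_i <= b * t.
      have : s`_0 <= s`_i by apply: incr_le.
      have : D = (b - 1) * (t - 1) by rewrite /t addrK mulrC divfK // gt_eqF.
      rewrite /y /D => hD h0.
      have e : (b - 1) * (t - 1) = b * t - t - b + 1 by ring.
      rewrite e in hD; lra.
    move/(pw_anti _ _ yi); apply: le_trans.
    rewrite powRM; last exact: ltW t0; last exact: ltW (lt_trans ltr01 b1).
    by rewrite ba mulrC.
  have : (k%:R : R) = (k.-1)%:R + 1 by rewrite natr1 prednK.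
  move=> hk h; rewrite -natr1 hk -/T; rewrite mulrA in h; lra.
have hP := Ps_le s hs; have C0 := Cs_gt0 s hs s2.
have ey : y - s`_k.-1 = t by rewrite /y addrC addKr.
rewrite /rat Ps_rcons Cs_rcons // -/k ey -/T.
have C1 : 0 < Cs s + T by rewrite addr_gt0.
rewrite ltr_pdivrMr // mulrAC ltr_pdivlMr //.
move: hE hP C0; rewrite -/k; set E := \sum_(_ <= _ < _) _; set P := Ps s; set C := Cs s.
rewrite -natr1; set K := k%:R; move=> h1 h2 C0.
have h3 := ler_wpM2r (ltW C0) h1.
have h4 := ler_wpM2r (ltW T0) h2.
have h5 : 0 < T * C by rewrite mulr_gt0.
lra.
Qed.

Lemma big_nth_R (s : seq R) (F : R -> R) :
  \sum_(0 <= i < size s) F s`_i = \sum_(x <- s) F x.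
Proof. by rewrite [RHS](big_nth 0). Qed.

Lemma sum_le_const (L : seq R) (F : R -> R) G : (forall x, x \in L -> F x <= G) ->
  \sum_(x <- L) F x <= (size L)%:R * G.
Proof.
elim: L => [|x L IH] H; first by rewrite big_nil mul0r.
rewrite big_cons /= -natr1 mulrDl mul1r addrC lerD //.
  by apply: IH => z zL; apply: H; rewrite inE zL orbT.
by apply: H; rewrite inE eqxx.
Qed.

Lemma Ps_cat_le L r G : (forall x z, x \in L -> z \in r -> `|x - z| `^ (1 - m) <= G) ->
  Ps (L ++ r) <= Ps L + Ps r + 2 * ((size L * size r)%:R * G).
Proof.
elim/last_ind: r => [|r y IH] H.
  by rewrite cats0 muln0 mulr0n mul0r mulr0 addr0 (proj1 (small_PC [::] isT)) addr0.
have {}IH : Ps (L ++ r) <= Ps L + Ps r + 2 * ((size L * size r)%:R * G).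
  by apply: IH => x z xL zr; apply: H => //; rewrite mem_rcons inE zr orbT.
rewrite -rcons_cat !Ps_rcons.
rewrite (big_nth_R (L ++ r) (fun x => `|y - x| `^ (1 - m))) big_cat /=.
rewrite (big_nth_R r (fun x => `|y - x| `^ (1 - m))).
have hL : \sum_(x <- L) `|y - x| `^ (1 - m) <= (size L)%:R * G.
  apply: sum_le_const => x xL; rewrite distrC; apply: H => //.
  by rewrite mem_rcons inE eqxx.
move: IH hL; rewrite size_rcons mulnS natrD natrM.
set a1 := \sum_(x <- L) _; set a2 := \sum_(x <- r) _.
move=> *; lra.
Qed.

Lemma Cs_cat_ge L r : (0 < size L)%N -> incr (L ++ r) -> Cs L + Cs r <= Cs (L ++ r).
Proof.
move=> L0; elim/last_ind: r => [|r y IH] H.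
  by rewrite cats0 (proj2 (small_PC [::] isT)) addr0.
rewrite -rcons_cat in H *.
have {}IH := IH (incr_rcons _ _ H).
have sz : (0 < size (L ++ r))%N by rewrite size_cat addn_gt0 L0.
rewrite (Cs_rcons (L ++ r) y sz).
case: (posnP (size r)) => [r0|r0].
  have -> : Cs (rcons r y) = 0.
    by apply: (proj2 (small_PC _ _)); rewrite size_rcons r0.
  rewrite addr0; have := powR_ge0 (y - (L ++ r)`_(size (L ++ r)).-1) (1 - m).
  have := Cs_ge0 r; lra.
rewrite (Cs_rcons r y r0).
have -> : (L ++ r)`_(size (L ++ r)).-1 = r`_(size r).-1.
  have e : (size L + size r).-1 = (size L + (size r).-1)%N.
    by rewrite -(prednK r0) addnS.
  rewrite nth_cat size_cat e.
  by rewrite ltnNge leq_addr /= addKn.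
by rewrite addrA lerD2r.
Qed.

Lemma incr_take n s : incr s -> incr (take n s).
Proof.
move=> hs i hi.
have [h1 h2] : (i.+1 < n)%N /\ (i.+1 < size s)%N.
  move: hi; rewrite size_take; case: ifP => hn hi; split => //.
    exact: ltn_trans hi hn.
  by apply: (leq_trans hi); rewrite leqNgt hn.
rewrite !nth_take //; first exact: hs.
exact: ltn_trans (ltnSn i) h1.
Qed.

Lemma incr_drop n s : incr s -> incr (drop n s).
Proof.
move=> hs i; rewrite size_drop !nth_drop addnS => hi; apply: hs.
by rewrite -addnS -ltn_subRL.
Qed.

Lemma split_bound M T s l : 0 <= M -> 0 < T -> incr s ->
  (forall u, incr u -> (size u < size s)%N -> Ps u <= M * Cs u) ->
  (l.+1 < size s)%N -> T <= s`_l.+1 - s`_l ->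
  Ps s <= M * Cs s + 2 * (((size s) * (size s))%:R * T `^ (1 - m)).
Proof.
move=> M0 T0 hs H hl hT.
set L := take l.+1 s; set r := drop l.+1 s.
have e : s = L ++ r by rewrite cat_take_drop.
have sL : size L = l.+1 by rewrite /L size_take hl.
have sr : size r = (size s - l.+1)%N by rewrite size_drop.
have cross : forall x z, x \in L -> z \in r -> `|x - z| `^ (1 - m) <= T `^ (1 - m).
  move=> x z /(nthP 0)[i hi <-] /(nthP 0)[j hj <-].
  rewrite sL in hi; rewrite sr in hj.
  rewrite /L /r nth_take // nth_drop.
  have hj' : (l.+1 + j < size s)%N by rewrite -ltn_subRL.
  have h1 : s`_l.+1 <= s`_(l.+1 + j) by apply: incr_le => //; rewrite leq_addr.
  have h2 : s`_i <= s`_l by apply: (incr_le _ _ _ hs); [rewrite -ltnS | apply: ltnW].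
  apply: pw_anti => //.
  rewrite distrC ger0_norm; last by rewrite subr_ge0; lra.
  lra.
have := Ps_cat_le L r (T `^ (1 - m)) cross; rewrite -e => h.
apply: (le_trans h).
have hPL : Ps L <= M * Cs L by apply: H; [exact: incr_take | rewrite sL].
have hPr : Ps r <= M * Cs r.
  apply: H; [exact: incr_drop | rewrite sr ltn_subrL; apply/andP; split => //].
  exact: leq_ltn_trans hl.
have hC : Cs L + Cs r <= Cs s.
  by have := @Cs_cat_ge L r; rewrite -e; apply; [rewrite sL | exact: hs].
have hsz : ((size L * size r)%:R : R) <= (size s * size s)%:R.
  rewrite ler_nat leq_mul //; rewrite ?sL ?sr ?leq_subr //; exact: ltnW.
have Ta := powR_ge0 T (1 - m).
have h3 := ler_wpM2r Ta hsz.
have h4 := ler_wpM2l M0 hC.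
move: h3 h4 hPL hPr; set q := T `^ (1 - m).
set A := ((size L * size r)%:R : R); set B := ((size s * size s)%:R : R).
move=> *; lra.
Qed.

Lemma ext_to d u : incr u -> (2 <= size u)%N ->
  exists v, [/\ incr v, size v = (size u + d)%N & rat u <= rat v].
Proof.
move=> hu u2; elim: d => [|d [v [hv sv huv]]]; first by exists u; rewrite addn0.
have v2 : (2 <= size v)%N by rewrite sv (leq_trans u2) // leq_addr.
have [y [hy hvy]] := extend v hv v2.
exists (rcons v y); split => //; first by rewrite size_rcons sv addnS.
exact: (le_trans huv (ltW hvy)).
Qed.

Lemma hypM k s : incr s -> size s = k ->
  (forall u, incr u -> size u = k -> rat u <= rat s) ->
  forall u, incr u -> (size u <= k)%N -> Ps u <= rat s * Cs u.
Proof.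
move=> hs sk hmax u hu uk.
case: (leqP (size u) 1) => u1.
  by have [-> ->] := small_PC u u1; rewrite mulr0.
have [v [hv sv huv]] := ext_to (k - size u) u hu u1.
rewrite subnKC // in sv.
have := le_trans huv (hmax v hv sv).
have C0 := Cs_gt0 u hu u1.
by rewrite /rat ler_pdivrMr.
Qed.

Lemma cont_sum (T : topologicalType) (I : eqType) (r : seq I) (P : pred I)
  (F : I -> T -> R) (x : T) :
  (forall i, i \in r -> P i -> {for x, continuous (F i)}) ->
  {for x, continuous (fun y => \sum_(i <- r | P i) F i y)}.
Proof.
elim: r => [|h r IH] H.
  have -> : (fun y => \sum_(i <- [::] | P i) F i y) = fun=> 0.
    by apply/funext => y; rewrite big_nil.
  exact: cst_continuous.
have -> : (fun y => \sum_(i <- h :: r | P i) F i y) =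
    (fun y => (if P h then F h y else 0) + \sum_(i <- r | P i) F i y).
  by apply/funext => y; rewrite big_cons; case: (P h) => //; rewrite add0r.
apply: cvgD.
  case Ph: (P h); last exact: cst_continuous.
  by apply: H; rewrite ?inE ?eqxx.
by apply: IH => i ir Pi; apply: H; rewrite // inE ir orbT.
Qed.

Lemma cont_pw (T : topologicalType) (g : T -> R) (x : T) :
  {for x, continuous g} -> 0 < g x -> {for x, continuous (fun y => g y `^ (1 - m))}.
Proof.
move=> gc gx.
have pc : {for (g x), continuous (fun r : R => r `^ (1 - m))}.
  apply: differentiable_continuous; apply/derivable1_diffP.
  by apply: derivable_powR; rewrite in_itv /= andbT.
exact: (continuous_comp gc pc).
Qed.

Lemma cont_sub (T : topologicalType) (f g : T -> R) (x : T) :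
  {for x, continuous f} -> {for x, continuous g} ->
  {for x, continuous (fun y => f y - g y)}.
Proof. by move=> hf hg; apply: cvgB. Qed.

Lemma cont_norm (T : topologicalType) (f : T -> R) (x : T) :
  {for x, continuous f} -> {for x, continuous (fun y => `|f y|)}.
Proof. by move=> hf; apply: cvg_norm. Qed.

Lemma cont_div (T : topologicalType) (f g : T -> R) (x : T) :
  {for x, continuous f} -> {for x, continuous g} -> g x != 0 ->
  {for x, continuous (fun y => f y / g y)}.
Proof. by move=> hf hg g0; apply: cvgM => //; exact: cvgV. Qed.

Definition pos {n} (v : 'rV[R]_n) : seq R :=
  mkseq (fun i => \sum_(l < n | (l < i)%N) v ord0 l) n.+1.

Lemma size_pos {n} (v : 'rV[R]_n) : size (pos v) = n.+1.
Proof. by rewrite size_mkseq. Qed.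

Lemma pos_nth {n} (v : 'rV[R]_n) i : (i < n.+1)%N ->
  (pos v)`_i = \sum_(l < n | (l < i)%N) v ord0 l.
Proof. by move=> hi; rewrite nth_mkseq. Qed.

Lemma pos_gap {n} (v : 'rV[R]_n) {i} (hi : (i < n)%N) :
  (pos v)`_i.+1 - (pos v)`_i = v ord0 (Ordinal hi).
Proof.
rewrite !pos_nth ?(ltn_trans hi) // (bigD1 (Ordinal hi)) /= ?ltnSn //.
have -> : \sum_(l < n | (l < i.+1)%N && (l != Ordinal hi)) v ord0 l
   = \sum_(l < n | (l < i)%N) v ord0 l.
  apply: eq_bigl => l; rewrite ltnS ltn_neqAle andbC; congr (_ && _).
by rewrite addrK.
Qed.

Lemma incr_pos {n} (v : 'rV[R]_n) : (forall l, 0 < v ord0 l) -> incr (pos v).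
Proof.
move=> h i; rewrite size_pos ltnS => hi.
by rewrite -subr_gt0 (pos_gap v hi).
Qed.

Lemma cont_pos_nth {n} (v : 'rV[R]_n) i : (i < n.+1)%N ->
  {for v, continuous (fun w : 'rV[R]_n => (pos w)`_i)}.
Proof.
move=> hi.
have -> : (fun w : 'rV[R]_n => (pos w)`_i) =
   (fun w => \sum_(l <- index_enum 'I_n | (l < i)%N) w ord0 l).
  by apply/funext => w; rewrite pos_nth.
apply: cont_sum => l _ _; exact: coord_continuous.
Qed.

Lemma cont_rat {n} (v : 'rV[R]_n) : (0 < n)%N -> (forall l, 0 < v ord0 l) ->
  {for v, continuous (fun w : 'rV[R]_n => rat (pos w))}.
Proof.
move=> n0 hv.
have hinc := incr_pos v hv.
have hC : {for v, continuous (fun w : 'rV[R]_n => Cs (pos w))}.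
  have -> : (fun w : 'rV[R]_n => Cs (pos w)) = (fun w =>
    \sum_(i <- index_iota 0 n) ((pos w)`_i.+1 - (pos w)`_i) `^ (1 - m)).
    by apply/funext => w; rewrite /Cs size_pos.
  apply: cont_sum => i; rewrite mem_index_iota => /andP[_ hi] _.
  apply: cont_pw; last by rewrite (pos_gap v hi).
  by apply: cont_sub; apply: cont_pos_nth; rewrite // ltnS ltnW.
have hP : {for v, continuous (fun w : 'rV[R]_n => Ps (pos w))}.
  have -> : (fun w : 'rV[R]_n => Ps (pos w)) = (fun w =>
    \sum_(i <- index_iota 0 n.+1) \sum_(j <- index_iota 0 n.+1 | i != j)
       `|(pos w)`_i - (pos w)`_j| `^ (1 - m)).
    by apply/funext => w; rewrite /Ps size_pos.
  apply: cont_sum => i; rewrite mem_index_iota => /andP[_ hi] _.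
  apply: cont_sum => j; rewrite mem_index_iota => /andP[_ hj] ij.
  apply: cont_pw.
    by apply: cont_norm; apply: cont_sub; apply: cont_pos_nth.
  rewrite normr_gt0 subr_eq0.
  have hs : (size (pos v) = n.+1) := size_pos v.
  case: (ltngtP i j) ij => // [lij|lji] _.
    by rewrite lt_eqF // incr_lt // hs.
  by rewrite gt_eqF // incr_lt // hs.
have C0 : Cs (pos v) != 0.
  by rewrite gt_eqF // Cs_gt0 // size_pos ltnS.
exact: cont_div.
Qed.

Lemma ex_min_idx (F : nat -> R) n : (0 < n)%N ->
  exists l, (l < n)%N /\ forall i, (i < n)%N -> F l <= F i.
Proof.
elim: n => // n IH _.
case: (posnP n) => [->|n0].
  by exists 0%N; split => // i; rewrite ltnS leqn0 => /eqP->.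
have [l [ln hl]] := IH n0.
case: (leP (F l) (F n)) => h.
  exists l; split; first exact: ltn_trans ln _.
  by move=> i; rewrite ltnS leq_eqVlt => /orP[/eqP->//|]; exact: hl.
exists n; split => // i; rewrite ltnS leq_eqVlt => /orP[/eqP->//|/hl].
exact: le_trans (ltW h).
Qed.

Lemma normalize k u : (0 < k)%N -> incr u -> size u = k.+1 ->
  exists w : 'rV[R]_k, [/\ forall l, 1 <= w ord0 l, 1 <= Cs (pos w) &
     rat (pos w) = rat u].
Proof.
move=> k0 hu su.
have [l0 [l0k hl0]] := ex_min_idx (fun l => u`_l.+1 - u`_l) _ k0.
set g0 := u`_l0.+1 - u`_l0.
have g00 : 0 < g0 by rewrite subr_gt0; apply: hu; rewrite su.
set w := \row_(l < k) (g0^-1 * (u`_l.+1 - u`_l)).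
have ep : pos w = map (fun x => g0^-1 * x + (- (g0^-1 * u`_0))) u.
  apply: (@eq_from_nth _ 0) => [|i hi]; first by rewrite size_pos size_map su.
  rewrite size_pos in hi.
  rewrite pos_nth // (nth_map 0) ?su //.
  rewrite (eq_bigr (fun l : 'I_k => g0^-1 * (u`_l.+1 - u`_l))); last by move=> l _; rewrite mxE.
  rewrite -(big_ord_widen k (fun l => g0^-1 * (u`_l.+1 - u`_l))) //.
  rewrite -mulr_sumr -(big_mkord (fun _ => true) (fun j => u`_j.+1 - u`_j)).
  by rewrite telescope_sumr // mulrBr.
have w1 : forall l, 1 <= w ord0 l.
  move=> l; rewrite mxE mulrC ler_pdivlMr // mul1r; exact: hl0.
exists w; split => //.
  rewrite /Cs size_pos /=.
  apply: le_trans (@sum_ge_term (fun i => ((pos w)`_i.+1 - (pos w)`_i) `^ (1 - m)) k l0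
     (fun i => powR_ge0 _ _) l0k).
  rewrite (pos_gap w l0k) mxE mulVf ?gt_eqF // powR1 //.
rewrite ep rat_map //; by rewrite invr_gt0.
Qed.

Definition MaxP k := exists s, [/\ incr s, size s = k &
  forall u, incr u -> size u = k -> rat u <= rat s].

Lemma rat2 u : incr u -> size u = 2%N -> rat u = 2.
Proof.
case: u => [|x [|y [|//]]] // hu _.
have xy : x < y by apply: (hu 0%N).
rewrite (_ : [:: x; y] = rcons [:: x] y) // /rat Ps_rcons Cs_rcons //=.
rewrite big_nat1 /= (proj1 (small_PC [:: x] isT)) (proj2 (small_PC [:: x] isT)).
rewrite add0r gtr0_norm ?subr_gt0 // add0r mulfK //.
by rewrite gt_eqF // powR_gt0 // subr_gt0.
Qed.

Lemma base2 : MaxP 2.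
Proof.
have h : incr [:: 0; 1] by case => //= _; exact: ltr01.
exists [:: 0; 1]; split => // u hu su.
by rewrite rat2 // rat2.
Qed.

Lemma step k : (2 <= k)%N -> MaxP k -> MaxP k.+1.
Proof.
move=> k2 [s [hs sk hmax]].
set rho := rat s.
have rho0 : 0 <= rho := rat_ge0 s.
have HM := hypM k s hs sk hmax.
have s2 : (2 <= size s)%N by rewrite sk.
have [y [hz hlt]] := extend s hs s2.
set z := rcons s y in hz hlt.
have sz : size z = k.+1 by rewrite size_rcons sk.
have k0 : (0 < k)%N by apply: leq_trans k2.
have [wz [wz1 _ wzr]] := normalize k z k0 hz sz.
set delta := rat z - rho.
have d0 : 0 < delta by rewrite subr_gt0.
set B := \sum_(l < k) wz ord0 l.
have hB : forall l, wz ord0 l <= B.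
  move=> l; rewrite /B (bigD1 l) //= lerDl; apply: sumr_ge0 => i _.
  exact: le_trans ler01 (wz1 i).
set N := (((k.+1) * (k.+1))%N%:R : R).
have N0 : 0 < N by rewrite ltr0n muln_gt0.
set T0 := (delta / (4 * N)) `^ ((1 - m)^-1).
have T00 : 0 < T0 by rewrite powR_gt0 // divr_gt0 // mulr_gt0.
have T0a : T0 `^ (1 - m) = delta / (4 * N).
  rewrite /T0 -powRrM mulVf ?powRr1 //.
    by rewrite ltW // divr_gt0 // mulr_gt0.
  by rewrite subr_eq0 eq_sym gt_eqF.
set T := Num.max (Num.max 1 B) T0.
have TT0 : T0 <= T by rewrite le_max lexx orbT.
have T1 : 1 <= T by rewrite !le_max lexx.
have TB : B <= T by rewrite !le_max lexx orbT.
have T0' : 0 < T by apply: lt_le_trans ltr01 T1.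
have Ta : 2 * (N * T `^ (1 - m)) < delta.
  have h1 : T `^ (1 - m) <= delta / (4 * N) by rewrite -T0a; apply: pw_anti.
  have h2 : N * T `^ (1 - m) <= N * (delta / (4 * N)) by rewrite ler_wpM2l // ltW.
  have h3 : N * (delta / (4 * N)) = delta / 4 by field; rewrite gt_eqF.
  rewrite h3 in h2; move: h2; set q := N * _; move=> h2; lra.
pose A := [set w : 'rV[R]_k | forall i, `[1, T]%classic (w ord0 i)]%classic.
have cA : compact A := @rV_compact _ _ (fun _ => `[1, T]%classic) (fun _ => @segment_compact _ 1 T).
have nA : (A !=set0)%classic.
  by exists (\row_(i < k) 1) => i; rewrite /= mxE in_itv /= lexx T1.
pose f := fun w : 'rV[R]_k => rat (pos w).
have fc : {within A, continuous f}%classic.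
  apply: continuous_in_subspaceT => w; rewrite inE => wA.
  apply: cont_rat k0 _ => l; have := wA l; rewrite /= in_itv /= => /andP[h _].
  exact: lt_le_trans ltr01 h.
have [c cA' hc] := compact_EVT_max nA cA fc.
rewrite inE in cA'.
have c1 : forall l, 0 < c ord0 l.
  by move=> l; have := cA' l; rewrite /= in_itv /= => /andP[h _]; exact: lt_le_trans ltr01 h.
have hzc : rat z <= f c.
  rewrite -wzr; apply: hc; rewrite inE => i /=; rewrite in_itv /= wz1 /=.
  exact: le_trans (hB i) TB.
exists (pos c); split; [exact: incr_pos | exact: size_pos |].
move=> u hu su.
have [w [w1 wC wr]] := normalize k u k0 hu su.
rewrite -wr.
case: (boolP [exists l : 'I_k, T < w ord0 l]) => [/existsP [l hl]|/existsPn hall].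
  have hinc : incr (pos w) by apply: incr_pos => i; exact: lt_le_trans ltr01 (w1 i).
  have hl' : T <= (pos w)`_l.+1 - (pos w)`_l.
    rewrite (pos_gap w (ltn_ord l)).
    have e : Ordinal (ltn_ord l) = l by apply/val_inj.
    by rewrite e ltW.
  have hsb := split_bound rho T (pos w) l rho0 T0' hinc.
  rewrite size_pos in hsb.
  have {hsb} := hsb (fun u' hu' su' => HM u' hu' su') (ltn_ord l) hl'.
  rewrite -/N => hP.
  have C0 : 0 < Cs (pos w) by apply: lt_le_trans ltr01 wC.
  have h1 : rat (pos w) <= rho + 2 * (N * T `^ (1 - m)).
    rewrite /rat ler_pdivrMr //; apply: (le_trans hP).
    have X0 : 0 <= 2 * (N * T `^ (1 - m)).
      by rewrite mulr_ge0 // mulr_ge0 // ?powR_ge0 // ltW.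
    have := ler_wpM2l X0 wC; rewrite mulr1 => hX.
    rewrite mulrDl; lra.
  apply: le_trans hzc; rewrite /delta in Ta; lra.
apply: hc; rewrite inE => i /=; rewrite in_itv /= w1 /=.
by have := hall i; rewrite -leNgt.
Qed.

Lemma maxP_all k : (2 <= k)%N -> MaxP k.
Proof.
elim: k => // k IH; rewrite ltnS leq_eqVlt => /orP[/eqP <-|k1].
  exact: base2.
by apply: step => //; apply: IH.
Qed.

Lemma Ps_gt0 s : incr s -> (2 <= size s)%N -> 0 < Ps s.
Proof.
move=> hs s2; have s0 : (0 < size s)%N by apply: leq_trans s2.
rewrite /Ps.
apply: (lt_le_trans _ (@sum_ge_term
  (fun i => \sum_(0 <= j < size s | i != j) `|s`_i - s`_j| `^ (1 - m)) _ 0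
  (fun i => sumr_ge0 _ (fun j _ => powR_ge0 _ _)) s0)).
rewrite /= big_mkcond.
apply: (lt_le_trans _ (@sum_ge_term
  (fun j => if 0%N != j then `|s`_0 - s`_j| `^ (1 - m) else 0) _ 1 _ s2)).
  rewrite /= powR_gt0 // normr_gt0 subr_eq0 lt_eqF //.
  exact: (incr_lt _ 0 1).
by move=> i; case: ifP => _ //; exact: powR_ge0.
Qed.

Lemma main_part (chi : R) (p : nat) : 0 < chi -> (2 <= p)%N ->
  exists X0 : p.-tuple R,
    [/\ in_Rp X0,
        (forall X : p.-tuple R, in_Rp X -> cp_ratio m X <= cp_ratio m X0),
        cp_ratio m X0 <= p%:R &
        forall alpha : R, 0 <= alpha ->
          ((exists M : R, forall X : p.-tuple R, in_Rp X -> M <= Fp chi m alpha X)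
           <-> chi <= (cp_ratio m X0)^-1)].
Proof.
move=> chi0 p2.
have [s [hs sp hmax]] := maxP_all p p2.
have p0 : (0 < p)%N by apply: leq_trans p2.
have eC (X : p.-tuple R) : consec_sum m X = Cs X by rewrite /consec_sum /Cs size_tuple.
have eP (X : p.-tuple R) : pair_sum m X = Ps X by rewrite /pair_sum /Ps size_tuple.
have eR (X : p.-tuple R) : cp_ratio m X = rat X by rewrite /cp_ratio /rat eC eP.
have inc (X : p.-tuple R) : in_Rp X -> incr X.
  by move=> [h _] i; rewrite size_tuple; exact: h.
set mu := (\sum_(0 <= i < p) s`_i) / p%:R.
have sz : size (map (fun x => 1 * x + (- mu)) s) == p by rewrite size_map sp.
pose X0 : p.-tuple R := Tuple sz.
have incX0 : incr X0 by apply: incr_map => //; exact: ltr01.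
have ratX0 : rat X0 = rat s by apply: rat_map => //; exact: ltr01.
have sX0 : size X0 = p by rewrite size_tuple.
have inX0 : in_Rp X0.
  split; first by move=> i hi; apply: incX0; rewrite sX0.
  have -> : \sum_(0 <= i < p) X0`_i = \sum_(0 <= i < p) (s`_i - mu).
    by apply: eq_big_nat => i /andP[_ hi]; rewrite /= (nth_map 0) ?sp // mul1r.
  rewrite sumrB sumr_const_nat subn0 -mulr_natr /mu divfK ?subrr //.
  by rewrite pnatr_eq0 -lt0n.
have X02 : (2 <= size X0)%N by rewrite sX0.
have C0 := Cs_gt0 X0 incX0 X02.
have P0 := Ps_gt0 X0 incX0 X02.
have rho0 : 0 < rat X0 by rewrite /rat divr_gt0.
have hmaxX (X : p.-tuple R) : in_Rp X -> Ps X <= rat X0 * Cs X.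
  move=> hX; have hiX := inc X hX.
  have CX : 0 < Cs X by apply: Cs_gt0 => //; rewrite size_tuple.
  have := hmax X hiX (size_tuple X); rewrite -ratX0 /rat ler_pdivrMr //.
exists X0; split => //.
- move=> X hX; rewrite !eR ratX0; apply: hmax; [exact: inc | exact: size_tuple].
- rewrite eR /rat ler_pdivrMr //; have := Ps_le X0 incX0; by rewrite sX0.
move=> alpha a0; rewrite eR; split.
  move=> [M hM]; rewrite leNgt; apply/negP => hlt.
  have hK : Cs X0 < chi * Ps X0.
    by move: hlt; rewrite /rat invf_div ltr_pdivrMr // mulrC.
  have m10 : 0 < m - 1 by rewrite subr_gt0.
  set K := (chi * Ps X0 - Cs X0) / (m - 1).
  have K0 : 0 < K by rewrite /K divr_gt0 // subr_gt0.
  set S := sqnorm X0.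
  have S0 : 0 <= S by apply: sumr_ge0 => i _; exact: sqr_ge0.
  set w := 2 + `|alpha * (S / 2) - M| / K.
  have w2 : 2 <= w by rewrite /w lerDl divr_ge0 // ltW.
  have w0 : 0 < w by apply: lt_le_trans w2.
  set lam := w `^ ((1 - m)^-1).
  have lam0 : 0 < lam by rewrite powR_gt0.
  have lama : lam `^ (1 - m) = w.
    rewrite /lam -powRrM mulVf ?powRr1 ?(ltW w0) //.
    by rewrite subr_eq0 eq_sym gt_eqF.
  have lam1 : lam <= 1.
    rewrite leNgt; apply/negP => h.
    have := pw_anti _ _ ltr01 (ltW h); rewrite lama powR1 => h'.
    lra.
  pose Xl := map_tuple (fun x => lam * x + 0) X0.
  have inXl : in_Rp Xl.
    split.
      move=> i hi; have := incr_map lam 0 X0 lam0 incX0 i.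
      by rewrite size_map sX0; apply.
    have -> : \sum_(0 <= i < p) Xl`_i = lam * \sum_(0 <= i < p) X0`_i.
      rewrite mulr_sumr; apply: eq_big_nat => i /andP[_ hi].
      by rewrite /= (nth_map 0) ?sX0 // addr0.
    by case: inX0 => _ ->; rewrite mulr0.
  have := hM Xl inXl.
  rewrite /Fp !eC !eP /= Cs_map // Ps_map // lama.
  have -> : sqnorm Xl = lam ^+ 2 * S.
    rewrite /sqnorm /S /sqnorm mulr_sumr; apply: eq_big_nat => i /andP[_ hi].
    by rewrite /= (nth_map 0) ?sX0 // addr0 exprMn.
  have l2 : lam ^+ 2 <= 1 by rewrite expr_le1 // ltW.
  have h1 : alpha * (lam ^+ 2 * S / 2) <= alpha * (S / 2).
    rewrite ler_wpM2l // ler_pM2r // ?invr_gt0 //.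
    by rewrite -[leRHS]mul1r ler_wpM2r.
  have h2 : (m - 1)^-1 * (w * Cs X0) - chi / (m - 1) * (w * Ps X0) = - (w * K).
    by rewrite /K; field; rewrite gt_eqF // subr_gt0.
  rewrite h2 => hF.
  have h3 : w * K = 2 * K + `|alpha * (S / 2) - M|.
    by rewrite /w mulrDl divfK // gt_eqF.
  have h4 := ler_norm (alpha * (S / 2) - M).
  lra.
move=> hchi; exists 0 => X hX.
have hiX := inc X hX.
have CX : 0 < Cs X by apply: Cs_gt0 => //; rewrite size_tuple.
have hP := hmaxX X hX.
have hcr : chi * rat X0 <= 1.
  by move: hchi; rewrite -div1r ler_pdivlMr.
have m10 : 0 < m - 1 by rewrite subr_gt0.
rewrite /Fp eC eP.
have -> : (m - 1)^-1 * Cs X - chi / (m - 1) * Ps X = (Cs X - chi * Ps X) / (m - 1).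
  by field; rewrite gt_eqF // subr_gt0.
have hS : 0 <= sqnorm X by apply: sumr_ge0 => i _; exact: sqr_ge0.
apply: addr_ge0; last by rewrite mulr_ge0 // divr_ge0.
apply: divr_ge0; last exact: ltW.
have h1 : chi * Ps X <= chi * (rat X0 * Cs X) by rewrite ler_wpM2l // ltW.
have h2 : chi * rat X0 * Cs X <= Cs X.
  by rewrite -[leRHS]mul1r ler_wpM2r // ltW.
rewrite mulrA in h1; lra.
Qed.

End S.

Theorem proposition2p3 (R : realType) (m chi : R) (p : nat) :
  1 < m -> 0 < chi -> (2 <= p)%N ->
  exists X0 : p.-tuple R,
    [/\ in_Rp X0,
        (forall X : p.-tuple R, in_Rp X -> cp_ratio m X <= cp_ratio m X0),
        cp_ratio m X0 <= p%:R &
        forall alpha : R, 0 <= alpha ->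
          ((exists M : R, forall X : p.-tuple R, in_Rp X -> M <= Fp chi m alpha X)
           <-> chi <= (cp_ratio m X0)^-1)].
Proof. by move=> m1; exact: main_part. Qed.
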